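(* Let $p$ be a prime, $n_1,n_2\ge 1$, and let $M_{n_1}\in\mathrm{Sym}_{n_1}(\mathbb{Z}_p)$, $M_{n_2}'\in\mathrm{Sym}_{n_2}(\mathbb{Z}_p)$ be nonsingular. The following are equivalent: (i) $(\mathrm{Cok}(M_{n_1}),\langle\cdot,\cdot\rangle)\simeq(\mathrm{Cok}(M_{n_2}'),\langle\cdot,\cdot\rangle)$. (ii) There exist $m\le\min\{n_1,n_2\}$ and matrices $M_{n_1}^{\mathrm{inv}}\in\mathrm{Sym}_{n_1-m}(\mathbb{Z}_p)\cap\mathrm{GL}_{n_1-m}(\mathbb{Z}_p)$, $M_{n_1}^{\mathrm{nil}}\in\mathrm{Sym}_m(p\mathbb{Z}_p)$, $M_{n_2}'^{\mathrm{inv}}\in\mathrm{Sym}_{n_2-m}(\mathbb{Z}_p)\cap\mathrm{GL}_{n_2-m}(\mathbb{Z}_p)$, $M_{n_2}'^{\mathrm{nil}}\in\mathrm{Sym}_m(p\mathbb{Z}_p)$ such that $(M_{n_1}^{\mathrm{nil}})^{-1}-(M_{n_2}'^{\mathrm{nil}})^{-1}\in\mathrm{Sym}_m(\mathbb{Z}_p)$, $M_{n_1}$ is congruent to $\begin{pmatrix}M_{n_1}^{\mathrm{inv}}&0\\0&M_{n_1}^{\mathrm{nil}}\end{pmatrix}$, and $M_{n_2}'$ is congruent to $\begin{pmatrix}M_{n_2}'^{\mathrm{inv}}&0\\0&M_{n_2}'^{\mathrm{nil}}\end{pmatrix}$. (iii) There exist $n\ge\max\{n_1,n_2\}$ and $M_{n-n_1}^c\in\mathrm{Sym}_{n-n_1}(\mathbb{Z}_p)\cap\mathrm{GL}_{n-n_1}(\mathbb{Z}_p)$,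 $M_{n-n_2}'^c\in\mathrm{Sym}_{n-n_2}(\mathbb{Z}_p)\cap\mathrm{GL}_{n-n_2}(\mathbb{Z}_p)$ such that $\begin{pmatrix}M_{n-n_1}^c&0\\0&M_{n_1}\end{pmatrix}$ is congruent to $\begin{pmatrix}M_{n-n_2}'^c&0\\0&M_{n_2}'\end{pmatrix}$.
   Context: $\mathbb{Z}_p$ denotes the $p$-adic integers; $\mathrm{Sym}_k(R)$ denotes symmetric $k\times k$ matrices over $R$. Two matrices $A,B\in\mathrm{Sym}_k(\mathbb{Z}_p)$ are congruent if $B=UAU^T$ for some $U\in\mathrm{GL}_k(\mathbb{Z}_p)$. For nonsingular $M\in\mathrm{Sym}_k(\mathbb{Z}_p)$, $\mathrm{Cok}(M):=\mathbb{Z}_p^k/M\mathbb{Z}_p^k$, a finite abelian $p$-group equipped with the perfect symmetric pairing $\langle x,y\rangle:=X^TM^{-1}Y\bmod\mathbb{Z}_p\in\mathbb{Q}_p/\mathbb{Z}_p$ ($X,Y$ lifts of $x,y$ to $\mathbb{Z}_p^k$). An isomorphism of such groups with pairings is a group isomorphism preserving the pairings. *)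

(* Defs.v *)
From HB Require Import structures.
From mathcomp Require Import all_boot all_algebra.
From mathcomp Require Import boolp zify.
Set Implicit Arguments. Unset Strict Implicit. Unset Printing Implicit Defensive.
Import GRing.Theory Num.Theory.
Local Open Scope ring_scope.

Section PadicIntegers.
Variable p : nat.
Definition padic_prime : nat := pdiv (maxn p 2).
Local Notation q := padic_prime.
Lemma padic_prime_prime : prime q.
Proof. by apply: pdiv_prime; rewrite leq_max ltnSn orbT. Qed.
Definition pmod (k : nat) : int := (q ^ k)%N%:Z.
Definition padic_coherent (f : nat -> int) := forall k, f k = (f k.+1 %% pmod k)%Z.
Record padic_int := PadicInt { padic_digits : nat -> int;
                               padic_digitsP : padic_coherent padic_digits }.

HB.instance Definition _ := gen_eqMixin padic_int.
HB.instance Definition _ := gen_choiceMixin padic_int.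

Local Notation D := padic_digits.

Lemma padic_eq (x y : padic_int) : D x =1 D y -> x = y.
Proof.
case: x y => f hf [g hg] /= /funext efg; subst g.
by rewrite (Prop_irrelevance hf hg).
Qed.

Lemma pmod_dvd j k : (j <= k)%N -> (pmod j %| pmod k)%Z.
Proof. by move=> le; rewrite dvdzE /pmod !absz_nat dvdn_exp2l. Qed.

Lemma modz_dvdm (a m d : int) : (d %| m)%Z -> modz (modz a m) d = modz a d.
Proof.
move=> /dvdzP [c ->]; rewrite [in RHS](divz_eq a (c * d)) mulrA modzMDl //.
Qed.

Lemma padic_norm (x : padic_int) k : (D x k %% pmod k)%Z = D x k.
Proof. by rewrite (padic_digitsP x k) modz_mod. Qed.

Lemma padic_cong (x : padic_int) j k : (j <= k)%N -> (D x k %% pmod j)%Z = D x j.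
Proof.
move=> /subnK <-; elim: (k - j)%N => [|i IH]; first exact: padic_norm.
rewrite addSn -IH (padic_digitsP x (i + j)) modz_dvdm //.
by apply: pmod_dvd; rewrite leq_addl.
Qed.

Lemma padic_of_coh (g : nat -> int) (hg : forall k, (g k.+1 = g k %[mod pmod k])%Z) :
  padic_coherent (fun k => (g k %% pmod k)%Z).
Proof.
move=> k; rewrite modz_dvdm ?pmod_dvd ?leqnSn //.
Qed.
Definition padic_of (g : nat -> int) (hg : forall k, (g k.+1 = g k %[mod pmod k])%Z) :
  padic_int := @PadicInt (fun k => (g k %% pmod k)%Z) (padic_of_coh hg).

Lemma padic_ofE g hg k : D (@padic_of g hg) k = (g k %% pmod k)%Z.
Proof. by []. Qed.

Lemma congD (x y : padic_int) k :
  (D x k.+1 + D y k.+1 = D x k + D y k %[mod pmod k])%Z.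
Proof. by rewrite -modzDm -!padic_digitsP. Qed.
Lemma congM (x y : padic_int) k :
  (D x k.+1 * D y k.+1 = D x k * D y k %[mod pmod k])%Z.
Proof. by rewrite -modzMm -!padic_digitsP. Qed.
Lemma congN (x : padic_int) k : (- D x k.+1 = - D x k %[mod pmod k])%Z.
Proof. by rewrite -modzNm -padic_digitsP. Qed.
Lemma congC (c : int) k : (c = c %[mod pmod k])%Z. Proof. by []. Qed.

Definition padic_add x y := padic_of (congD x y).
Definition padic_mul x y := padic_of (congM x y).
Definition padic_opp x := padic_of (congN x).
Definition padic_cst c := padic_of (congC c).
Definition padic_zero := padic_cst 0.
Definition padic_one := padic_cst 1.

Lemma padic_addA : associative padic_add.
Proof.
move=> x y z; apply: padic_eq => k; rewrite !padic_ofE.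
by rewrite modzDml modzDmr addrA.
Qed.
Lemma padic_addC : commutative padic_add.
Proof. by move=> x y; apply: padic_eq => k; rewrite !padic_ofE addrC. Qed.
Lemma padic_add0 : left_id padic_zero padic_add.
Proof. by move=> x; apply: padic_eq => k; rewrite !padic_ofE modzDml add0r padic_norm. Qed.
Lemma padic_addN : left_inverse padic_zero padic_opp padic_add.
Proof. by move=> x; apply: padic_eq => k; rewrite !padic_ofE modzDml addNr. Qed.

HB.instance Definition _ := GRing.isZmodule.Build padic_int
  padic_addA padic_addC padic_add0 padic_addN.

Lemma padic_mulA : associative padic_mul.
Proof.
move=> x y z; apply: padic_eq => k; rewrite !padic_ofE.
by rewrite modzMml modzMmr mulrA.
Qed.
Lemma padic_mulC : commutative padic_mul.
Proof. by move=> x y; apply: padic_eq => k; rewrite !padic_ofE mulrC. Qed.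
Lemma padic_mul1 : left_id padic_one padic_mul.
Proof. by move=> x; apply: padic_eq => k; rewrite !padic_ofE modzMml mul1r padic_norm. Qed.
Lemma padic_mulDl : left_distributive padic_mul padic_add.
Proof.
move=> x y z; apply: padic_eq => k; rewrite !padic_ofE.
by rewrite modzMml modzDm mulrDl.
Qed.
Lemma padic_one_neq0 : padic_one != 0.
Proof.
apply/eqP => /(congr1 (fun x => D x 1)).
change (D padic_one 1 = D padic_zero 1 -> False); rewrite /padic_one /padic_zero /padic_cst !padic_ofE /pmod expn1.
rewrite modz_small ?mod0z //.
by rewrite /= ltz_nat prime_gt1 // padic_prime_prime.
Qed.

HB.instance Definition _ := GRing.Zmodule_isComNzRing.Build padic_int
  padic_mulA padic_mulC padic_mul1 padic_mulDl padic_one_neq0.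

Definition padic_unit : {pred padic_int} := fun x => `[< exists y, y * x = 1 >].
Definition padic_inv (x : padic_int) : padic_int :=
  match pselect (exists y, y * x = 1) with
  | left h => proj1_sig (cid h)
  | right _ => x
  end.

Lemma padic_mulVx : {in padic_unit, left_inverse 1 padic_inv *%R}.
Proof.
move=> x /asboolP hx; rewrite /padic_inv; case: pselect => [h|//].
by case: (cid h).
Qed.
Lemma padic_unitPl x y : y * x = 1 -> padic_unit x.
Proof. by move=> h; apply/asboolP; exists y. Qed.
Lemma padic_inv_out : {in [predC padic_unit], padic_inv =1 id}.
Proof.
move=> x; rewrite inE /= => /asboolPn nx; rewrite /padic_inv.
by case: pselect.
Qed.

HB.instance Definition _ := GRing.ComNzRing_hasMulInverse.Build padic_int
  padic_mulVx padic_unitPl padic_inv_out.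

Lemma padic_valuation (x : padic_int) : x != 0 ->
  exists a, forall k, (a < k)%N -> (pmod a %| D x k)%Z && ~~ (pmod a.+1 %| D x k)%Z.
Proof.
move=> nx0.
have ex : exists k, D x k != 0.
  apply: contrapT => allz; move/negP: nx0; apply; apply/eqP.
  apply: padic_eq => k.
  change (D x k = D padic_zero k); rewrite /padic_zero /padic_cst padic_ofE mod0z.
  by apply: contrapT => ne; apply: allz; exists k; apply/eqP.
case: (ex_minnP ex) => k xk kmin.
have k0 : k != 0%N.
  by apply: contraNneq xk => ->; rewrite -padic_norm /pmod expn0 modz1.
have kpos : (0 < k)%N by rewrite lt0n.
exists k.-1 => j kj; rewrite prednK //.
have kj' : (k <= j)%N by rewrite -(prednK kpos).
apply/andP; split.
  apply/dvdz_mod0P; rewrite padic_cong ?(leq_trans (leq_pred k)) //.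
  apply/eqP; apply: contraT => nz; have := kmin _ nz.
  by rewrite -ltnS prednK // ltnn.
by apply: contra xk => /dvdz_mod0P; rewrite padic_cong // => ->.
Qed.

Lemma padic_mulf_eq0 : GRing.integral_domain_axiom padic_int.
Proof.
move=> x y xy0; apply: contraT; rewrite negb_or => /andP [nx ny].
have [a ha] := padic_valuation nx; have [b hb] := padic_valuation ny.
set k := (a + b).+1.
have /andP [dx ndx] := ha k (leq_ltn_trans (leq_addr b a) (ltnSn _)).
have /andP [dy ndy] := hb k (leq_ltn_trans (leq_addl a b) (ltnSn _)).
have : (pmod k %| D x k * D y k)%Z.
  apply/dvdz_mod0P; have := congr1 (fun z => D z k) xy0.
  change (D (padic_mul x y) k = D padic_zero k -> (D x k * D y k %% pmod k)%Z = 0).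
  by rewrite /padic_zero /padic_cst !padic_ofE mod0z.
move: dx ndx dy ndy; rewrite !dvdzE /pmod !absz_nat abszM.
set X := `|D x k|%N; set Y := `|D y k|%N.
have pq := padic_prime_prime.
move=> dx ndx dy ndy.
have Y0 : (0 < Y)%N by rewrite lt0n; apply: contra ndy => /eqP ->; rewrite dvdn0.
have X1 : (0 < X)%N by rewrite lt0n; apply: contra ndx => /eqP ->; rewrite dvdn0.
rewrite !pfactor_dvdn ?muln_gt0 ?X1 // in dx ndx dy ndy *.
rewrite lognM // /k.
move: dx ndx dy ndy; set u := logn q X; set v := logn q Y; lia.
Qed.

HB.instance Definition _ := GRing.ComUnitRing_isIntegral.Build padic_int
  padic_mulf_eq0.

End PadicIntegers.

(* For a prime p, padic_prime p = p, so padic_int p is Z_p realised as the   *)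
(* inverse limit of Z/p^k Z: coherent sequences (x_k)_k of integers with     *)
(* 0 <= x_k < p^k and x_{k+1} = x_k mod p^k.                                 *)

Lemma padic_prime_id p : prime p -> padic_prime p = p.
Proof.
move=> pp; rewrite /padic_prime; have p2 := prime_gt1 pp.
by rewrite (maxn_idPl p2) pdiv_id.
Qed.

Definition Qp (p : nat) := {fraction padic_int p}.

Definition toQp {p : nat} (x : padic_int p) : Qp p := FracField.tofrac x.
Definition mxQp {p m n : nat} (A : 'M[padic_int p]_(m, n)) : 'M[Qp p]_(m, n) :=
  map_mx toQp A.

Definition in_Zp {p : nat} (x : Qp p) : Prop := exists z : padic_int p, x = toQp z.

Definition symmx {R : Type} {k : nat} (A : 'M[R]_k) : Prop := A^T = A.

Definition in_pZp_mx {p m n : nat} (A : 'M[padic_int p]_(m, n)) : Prop :=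
  forall i j, exists c : padic_int p, A i j = p%:R * c.

Definition in_Zp_mx {p m n : nat} (A : 'M[Qp p]_(m, n)) : Prop :=
  forall i j, in_Zp (A i j).

Definition congruent {R : comUnitRingType} {k : nat} (A B : 'M[R]_k) : Prop :=
  exists2 U : 'M[R]_k, U \in unitmx & B = U *m A *m U^T.

Definition congruent_dim {R : comUnitRingType} {a b : nat}
  (A : 'M[R]_a) (B : 'M[R]_b) : Prop :=
  exists e : b = a, congruent A (castmx (e, e) B).

Definition in_image {R : nzRingType} {k : nat} (M : 'M[R]_k) (v : 'cV[R]_k) : Prop :=
  exists w : 'cV[R]_k, v = M *m w.

(* the pairing <x, y> = X^T M^{-1} Y (a value in Q_p, to be read mod Z_p) *)
Definition cok_pairing {p k : nat} (M : 'M[padic_int p]_k) (X Y : 'cV[padic_int p]_k)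
  : Qp p := ((mxQp X)^T *m invmx (mxQp M) *m mxQp Y) 0 0.

(* (Cok M, <,>) ~= (Cok M', <,>): an isomorphism of the groups               *)
(* Z_p^k1 / M Z_p^k1 ~= Z_p^k2 / M' Z_p^k2, given by a map g on              *)
(* representatives, preserving the pairings with values in Q_p/Z_p.          *)
Definition cok_isometric {p k1 k2 : nat}
  (M : 'M[padic_int p]_k1) (M' : 'M[padic_int p]_k2) : Prop :=
  exists g : 'cV[padic_int p]_k1 -> 'cV[padic_int p]_k2,
    [/\ (* well defined and injective on the quotients *)
        forall X Y, in_image M (X - Y) <-> in_image M' (g X - g Y),
        forall X Y, in_image M' (g (X + Y) - (g X + g Y)),
        forall Z, exists X, in_image M' (Z - g X) &
        forall X Y, in_Zp (cok_pairing M X Y - cok_pairing M' (g X) (g Y))].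

(* Main.v *)
Require Import Defs.
From HB Require Import structures.
From mathcomp Require Import all_boot all_order all_algebra.
From mathcomp Require Import boolp zify ring.
Set Implicit Arguments. Unset Strict Implicit. Unset Printing Implicit Defensive.
Import Order.TTheory GRing.Theory Num.Theory.
Local Open Scope ring_scope.

Section Zp.
Variable p : nat.
Hypothesis pp : prime p.
Local Notation R := (padic_int p).
Local Notation D := (@padic_digits p).

Lemma qE : padic_prime p = p. Proof. exact: padic_prime_id. Qed.
Lemma pmodE k : pmod p k = (p ^ k)%N%:Z. Proof. by rewrite /pmod qE. Qed.
Lemma pmod_gt0 k : 0 < pmod p k.
Proof. by rewrite pmodE ltz_nat expn_gt0 prime_gt0. Qed.
Lemma pmod_neq0 k : pmod p k != 0.
Proof. by rewrite gt_eqF // pmod_gt0. Qed.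
Lemma pmodD j k : pmod p (j + k) = pmod p j * pmod p k.
Proof. by rewrite !pmodE expnD PoszM. Qed.

Lemma D_add (x y : R) k : D (x + y) k = ((D x k + D y k) %% pmod p k)%Z.
Proof. by []. Qed.
Lemma D_mul (x y : R) k : D (x * y) k = ((D x k * D y k) %% pmod p k)%Z.
Proof. by []. Qed.
Lemma D_opp (x : R) k : D (- x) k = ((- D x k) %% pmod p k)%Z.
Proof. by []. Qed.
Lemma D_0 k : D 0 k = 0.
Proof. exact: mod0z. Qed.
Lemma D_1 k : D 1 k = (1 %% pmod p k)%Z.
Proof. by []. Qed.

Lemma D_nat n k : D (n%:R) k = (n%:Z %% pmod p k)%Z.
Proof.
elim: n => [|n IH]; first by rewrite D_0 mod0z.
by rewrite -addn1 natrD D_add IH D_1 modzDm PoszD.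
Qed.

Lemma D_pk_mul (y : R) k : D ((p ^ k)%N%:R * y) k = 0.
Proof. by rewrite D_mul D_nat -pmodE modzMml mulrC modzMl. Qed.

Lemma D0_div (x : R) k : D x k = 0 -> exists y, x = (p ^ k)%N%:R * y.
Proof.
move=> x0.
have dv i : (k <= i)%N -> (pmod p k %| D x i)%Z.
  by move=> ki; apply/dvdz_mod0P; rewrite padic_cong.
pose g j := (D x (j + k) %/ pmod p k)%Z.
have hg : forall j, (g j.+1 = g j %[mod pmod p j])%Z.
  move=> j; rewrite /g.
  have e : D x (j.+1 + k) = ((D x (j.+1+k) %/ pmod p (j + k))%Z * pmod p j) * pmod p k
                             + D x (j + k).
    rewrite -mulrA -pmodD (padic_digitsP x (j + k)) -addSn.
    exact: divz_eq.
  rewrite e divzMDl ?pmod_neq0 //.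
  exact: modzMDl.
exists (padic_of hg); apply: padic_eq => j.
rewrite D_mul padic_ofE D_nat -pmodE modzMml modzMmr /g mulrC divzK ?dv ?leq_addl //.
by rewrite padic_cong // leq_addr.
Qed.

Lemma div_D0 (x : R) k : (exists y, x = (p ^ k)%N%:R * y) -> D x k = 0.
Proof. by case=> y ->; apply: D_pk_mul. Qed.

Lemma D1_1 : D 1 1 = 1.
Proof. by rewrite D_1 pmodE expn1 modz_small //= ltz_nat prime_gt1. Qed.

Lemma unitP (x : R) : (x \is a GRing.unit) = (D x 1 != 0).
Proof.
apply/idP/idP.
  move=> ux; apply/negP => /eqP /D0_div [y xy].
  have := D1_1; rewrite -(mulVr ux) xy mulrCA D_pk_mul //.
move=> nx.
pose g j := (egcdz (D x j) (pmod p j)).1.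
have cop j : coprimez (D x j) (pmod p j).
  case: j => [|j]; first by rewrite coprimezE pmodE expn0 absz_nat coprimen1.
  rewrite coprimezE pmodE absz_nat coprime_pexpr // coprime_sym prime_coprime //.
  apply: contra nx => h.
  have h' : (pmod p 1 %| D x j.+1)%Z by rewrite pmodE expn1 dvdzE absz_nat.
  by move/dvdz_mod0P: h'; rewrite padic_cong // => ->.
have inv j : (pmod p j %| g j * D x j - 1)%Z.
  rewrite /g; case: egcdzP => u v /= e _.
  move: (cop j); rewrite /coprimez => /eqP ge; rewrite ge in e.
  have -> : u * D x j - 1 = - (v * pmod p j) by rewrite -e opprD addrA subrr add0r.
  by rewrite rpredN dvdz_mull // dvdzz.
have hg : forall j, (g j.+1 = g j %[mod pmod p j])%Z.
  move=> j; apply/eqP; rewrite eqz_mod_dvd.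
  have h1 : (pmod p j %| g j.+1 * D x j - 1)%Z.
    have := inv j.+1; rewrite (padic_digitsP x j) => h.
    have : (pmod p j %| g j.+1 * D x j.+1 - 1)%Z.
      by apply: dvdz_trans h; apply: pmod_dvd.
    move/dvdz_mod0P => h'; apply/dvdz_mod0P.
    by rewrite -modzDml -modzMmr modz_mod modzMmr modzDml.
  have -> : g j.+1 - g j = g j.+1 * (1 - g j * D x j) + g j * (g j.+1 * D x j - 1).
    by rewrite mulrBr mulr1 mulrBr mulr1 mulrCA mulrA addrA subrK.
  apply: rpredD; apply: dvdz_mull => //.
  by rewrite -opprB rpredN inv.
apply/unitrP; exists (padic_of hg).
have e : padic_of hg * x = 1.
  apply: padic_eq => j; rewrite D_mul padic_ofE modzMml D_1.
  by apply/eqP; rewrite eqz_mod_dvd inv.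
by split => //; rewrite mulrC.
Qed.

Lemma D_int (z : int) k : D (z%:~R) k = (z %% pmod p k)%Z.
Proof.
case: z => n; first exact: D_nat.
rewrite NegzE mulrNz D_opp.
have -> : (n.+1%:Z)%:~R = (n.+1)%:R :> R by [].
by rewrite D_nat modzNm.
Qed.

Lemma Zp_approx (x : R) k : exists y, x = (D x k)%:~R + (p ^ k)%N%:R * y.
Proof.
have : D (x - (D x k)%:~R) k = 0.
  by rewrite D_add D_opp D_int padic_norm modzDmr subrr mod0z.
move=> /D0_div [y e]; exists y; by rewrite -e addrC subrK.
Qed.

Lemma Zp_val (x : R) : x != 0 -> exists k u, u \is a GRing.unit /\ x = (p ^ k)%N%:R * u.
Proof.
move=> nx; have [a ha] := padic_valuation nx.
have /andP [d1 nd1] := ha a.+1 (ltnSn a).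
have : D x a = 0.
  rewrite -(padic_cong x (leqnSn a)); exact/dvdz_mod0P.
move=> /D0_div [u xu]; exists a, u; split => //.
rewrite unitP; apply/negP => /eqP /D0_div [v uv].
move: nd1; rewrite xu uv mulrA -natrM -expnSr.
have -> : D ((p ^ a.+1)%N%:R * v) a.+1 = 0 by exact: D_pk_mul.
by rewrite dvdz0.
Qed.

End Zp.

Section PiF.
Variable p : nat.
Local Notation R := (padic_int p).
Local Notation D := (@padic_digits p).
Local Notation F := ('F_(padic_prime p)).
Lemma qpos k : 0 < pmod p k.
Proof. by rewrite /pmod ltz_nat expn_gt0 prime_gt0 // padic_prime_prime. Qed.
Definition piF (x : R) : 'F_(padic_prime p) := (D x 1)%:~R.

Lemma Fp_modz (z : int) : ((z %% pmod p 1)%Z)%:~R = z%:~R :> 'F_(padic_prime p).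
Proof.
rewrite [in RHS](divz_eq z (pmod p 1)) [RHS]intrD [X in _ = X + _]intrM /pmod expn1.
have -> : (((padic_prime p)%:Z)%:~R : 'F_(padic_prime p)) = 0.
  exact: pchar_Fp_0 (padic_prime_prime p).
by rewrite mulr0 add0r.
Qed.

Lemma piF_zmod : zmod_morphism piF.
Proof.
move=> x y; rewrite /piF D_add D_opp Fp_modz intrD.
by rewrite Fp_modz intrN.
Qed.
HB.instance Definition _ := GRing.isZmodMorphism.Build R 'F_(padic_prime p) piF piF_zmod.

Lemma piF_monoid : monoid_morphism piF.
Proof.
split; first by rewrite /piF D_1 /pmod expn1 modz_small //= ltz_nat prime_gt1 // padic_prime_prime.
by move=> x y; rewrite /piF D_mul Fp_modz intrM.
Qed.
HB.instance Definition _ := GRing.isMonoidMorphism.Build R 'F_(padic_prime p) piF piF_monoid.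

Lemma piF_eq0 (x : R) : (piF x == 0) = (D x 1 == 0).
Proof.
rewrite /piF; have := padic_norm x 1; have := D x 1.
have ge0 : 0 <= D x 1 by rewrite -padic_norm modz_ge0 // gt_eqF // qpos.
have lt : D x 1 < pmod p 1 by rewrite -padic_norm ltz_pmod ?qpos.
move: ge0 lt; case: (D x 1) => // n _; rewrite /pmod expn1 ltz_nat => lt _ _.
have -> : ((n%:Z)%:~R : 'F_(padic_prime p)) = n%:R by [].
apply/eqP/eqP => [h|[->]] //.
have := val_Fp_nat (padic_prime_prime p) n; rewrite h modn_small //= => <-.
by [].
Qed.

Lemma unit_piF (x : R) : prime p -> (x \is a GRing.unit) = (piF x != 0).
Proof. by move=> pp; rewrite unitP // piF_eq0. Qed.

Lemma piF_ker (x : R) : prime p -> (piF x == 0) <-> exists c, x = p%:R * c.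
Proof.
move=> pp; rewrite piF_eq0; split.
  by move=> /eqP /(D0_div pp) [y ->]; exists y; rewrite expn1.
by case=> c ->; apply/eqP; have := @D_pk_mul p pp c 1; rewrite expn1.
Qed.

Definition lF (a : F) : R := (a : nat)%:R.
Lemma piF_lF a : piF (lF a) = a.
Proof. by rewrite /lF rmorph_nat natr_Zp. Qed.

Lemma unitmx_piF n (A : 'M[R]_n) : prime p -> (A \in unitmx) = (map_mx piF A \in unitmx).
Proof. by move=> pp; rewrite !unitmxE det_map_mx unitfE -unit_piF. Qed.

Lemma pZp_piF m n (A : 'M[R]_(m, n)) : prime p -> in_pZp_mx A <-> map_mx piF A = 0.
Proof.
move=> pp; split.
  move=> h; apply/matrixP => i j; rewrite !mxE; apply/eqP/(piF_ker _ pp); exact: h.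
move=> /matrixP h i j; apply/(piF_ker _ pp); have := h i j; rewrite !mxE => ->.
by [].
Qed.
End PiF.

Section CG.
Variable K : comUnitRingType.

Definition cg {a b} (A : 'M[K]_a) (B : 'M[K]_b) :=
  exists U : 'M[K]_(b, a), exists V : 'M[K]_(a, b),
    [/\ U *m V = 1%:M, V *m U = 1%:M & B = U *m A *m U^T].

Lemma cg_refl a (A : 'M[K]_a) : cg A A.
Proof. by exists 1%:M, 1%:M; rewrite mulmx1 mul1mx trmx1 mulmx1. Qed.

Lemma cg_sym a b (A : 'M[K]_a) (B : 'M[K]_b) : cg A B -> cg B A.
Proof.
case=> U [V [UV VU ->]]; exists V, U; split => //.
by rewrite !mulmxA VU mul1mx -mulmxA -trmx_mul VU trmx1 mulmx1.
Qed.

Lemma cg_trans a b c (A : 'M[K]_a) (B : 'M[K]_b) (C : 'M[K]_c) :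
  cg A B -> cg B C -> cg A C.
Proof.
case=> U [V [UV VU ->]] [U' [V' [UV' VU' ->]]].
exists (U' *m U), (V *m V'); split.
- by rewrite mulmxA -(mulmxA U') UV mulmx1 UV'.
- by rewrite mulmxA -(mulmxA V) VU' mulmx1 VU.
by rewrite trmx_mul !mulmxA.
Qed.

Lemma cg_block a1 a2 b1 b2 (A1 : 'M[K]_a1) (A2 : 'M[K]_a2) (B1 : 'M[K]_b1) (B2 : 'M[K]_b2) :
  cg A1 B1 -> cg A2 B2 -> cg (block_mx A1 0 0 A2) (block_mx B1 0 0 B2).
Proof.
case=> U [V [UV VU ->]] [U' [V' [UV' VU' ->]]].
exists (block_mx U 0 0 U'), (block_mx V 0 0 V'); split.
- by rewrite mulmx_block !mulmx0 !mul0mx !addr0 !add0r UV UV' -scalar_mx_block.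
- by rewrite mulmx_block !mulmx0 !mul0mx !addr0 !add0r VU VU' -scalar_mx_block.
by rewrite tr_block_mx !trmx0 !mulmx_block !mulmx0 !mul0mx !addr0 !add0r !mul0mx.
Qed.

Lemma cg_cast a b (e : a = b) (A : 'M[K]_a) : cg A (castmx (e, e) A).
Proof. by case: b / e; rewrite castmx_id; apply: cg_refl. Qed.

Lemma cg_swap a b (A : 'M[K]_a) (B : 'M[K]_b) :
  cg (block_mx A 0 0 B) (block_mx B 0 0 A).
Proof.
exists (block_mx 0 1%:M 1%:M 0), (block_mx 0 1%:M 1%:M 0); split.
- by rewrite mulmx_block !mulmx0 !mul0mx !mulmx1 !addr0 !add0r -scalar_mx_block.
- by rewrite mulmx_block !mulmx0 !mul0mx !mulmx1 !addr0 !add0r -scalar_mx_block.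
rewrite tr_block_mx !trmx0 !trmx1 !mulmx_block !mulmx0 !mul0mx !mulmx1 !mul1mx.
by rewrite !addr0 !add0r.
Qed.

Lemma cg_assoc a b c (A : 'M[K]_a) (B : 'M[K]_b) (C : 'M[K]_c) :
  cg (block_mx (block_mx A 0 0 B) 0 0 C) (block_mx A 0 0 (block_mx B 0 0 C)).
Proof.
have e := @block_mxA K a b c a b c A 0 0 0 B 0 0 0 C; rewrite /= row_mx0 col_mx0 in e.
by rewrite e row_mx0 col_mx0; exact: cg_cast.
Qed.

Lemma cg_congruent a (A B : 'M[K]_a) : congruent A B -> cg A B.
Proof.
case=> U uU ->; exists U, (invmx U); split; [exact: mulmxV | exact: mulVmx | by []].
Qed.

Lemma congruent_cg a (A B : 'M[K]_a) : cg A B -> congruent A B.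
Proof.
case=> U [V [UV VU ->]]; exists U => //.
by case: (mulmx1_unit UV).
Qed.

Lemma cgd_cg a b (A : 'M[K]_a) (B : 'M[K]_b) : congruent_dim A B -> cg A B.
Proof.
case=> e /cg_congruent h; apply: (cg_trans h); apply: cg_sym.
exact: cg_cast.
Qed.

Lemma cg_cgd a b (A : 'M[K]_a) (B : 'M[K]_b) (e : b = a) : cg A B -> congruent_dim A B.
Proof.
move=> h; exists e; apply: congruent_cg; apply: (cg_trans h); exact: cg_cast.
Qed.
End CG.

Section Field.
Variable F : comUnitRingType.
Lemma invmx_right n (B X : 'M[F]_n) : B *m X = 1%:M -> invmx B = X.
Proof.
move=> h; have [uB _] := mulmx1_unit h.
by rewrite -[invmx B]mulmx1 -h mulmxA mulVmx // mul1mx.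
Qed.
Lemma invmx_cg a b (A : 'M[F]_a) (U : 'M[F]_(b, a)) (V : 'M[F]_(a, b)) :
  A \in unitmx -> U *m V = 1%:M -> V *m U = 1%:M ->
  invmx (U *m A *m U^T) = V^T *m invmx A *m V.
Proof.
move=> uA UV VU.
have h : U *m A *m U^T *m (V^T *m invmx A *m V) = 1%:M.
  rewrite !mulmxA -(mulmxA _ U^T) -trmx_mul VU trmx1 mulmx1.
  by rewrite -(mulmxA _ A) mulmxV // mulmx1 UV.
exact: invmx_right.
Qed.
End Field.

Section Qp.
Variable p : nat.
Local Notation R := (padic_int p).
Local Notation Q := (Qp p).

HB.instance Definition _ := GRing.isZmodMorphism.Build R Q (@toQp p)
  (@tofrac_is_zmod_morphism R).
HB.instance Definition _ := GRing.isMonoidMorphism.Build R Q (@toQp p)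
  (@tofrac_is_monoid_morphism R).

Lemma toQp_inj : injective (@toQp p).
Proof. by move=> x y /eqP; rewrite /toQp tofrac_eq => /eqP. Qed.

Lemma mxQp_inj m n : injective (@mxQp p m n).
Proof.
move=> A B /matrixP h; apply/matrixP => i j.
by have := h i j; rewrite !mxE => /toQp_inj.
Qed.

Lemma mxQpM m n k (A : 'M[R]_(m, n)) (B : 'M[R]_(n, k)) :
  mxQp (A *m B) = mxQp A *m mxQp B.
Proof. exact: map_mxM. Qed.
Lemma mxQpD m n (A B : 'M[R]_(m, n)) : mxQp (A + B) = mxQp A + mxQp B.
Proof. exact: map_mxD. Qed.
Lemma mxQpB m n (A B : 'M[R]_(m, n)) : mxQp (A - B) = mxQp A - mxQp B.
Proof. exact: map_mxB. Qed.
Lemma mxQpN m n (A : 'M[R]_(m, n)) : mxQp (- A) = - mxQp A.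
Proof. exact: map_mxN. Qed.
Lemma mxQp0 m n : mxQp (0 : 'M[R]_(m, n)) = 0.
Proof. exact: map_mx0. Qed.
Lemma mxQp1 n : mxQp (1%:M : 'M[R]_n) = 1%:M.
Proof. exact: map_mx1. Qed.
Lemma mxQp_tr m n (A : 'M[R]_(m, n)) : mxQp A^T = (mxQp A)^T.
Proof. by rewrite /mxQp map_trmx. Qed.
Lemma mxQp_block m1 m2 n1 n2 (A : 'M[R]_(m1, n1)) (B : 'M[R]_(m1, n2))
  (C : 'M[R]_(m2, n1)) (D : 'M[R]_(m2, n2)) :
  mxQp (block_mx A B C D) = block_mx (mxQp A) (mxQp B) (mxQp C) (mxQp D).
Proof. exact: map_block_mx. Qed.
Lemma mxQp_col m1 m2 n (A : 'M[R]_(m1, n)) (B : 'M[R]_(m2, n)) :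
  mxQp (col_mx A B) = col_mx (mxQp A) (mxQp B).
Proof. exact: map_col_mx. Qed.
Lemma mxQpE m n (A : 'M[R]_(m, n)) i j : mxQp A i j = toQp (A i j).
Proof. by rewrite mxE. Qed.
Lemma det_mxQp n (A : 'M[R]_n) : \det (mxQp A) = toQp (\det A).
Proof. exact: det_map_mx. Qed.

Lemma unit_mxQp n (A : 'M[R]_n) : \det A != 0 -> mxQp A \in unitmx.
Proof.
by move=> dA; rewrite unitmxE det_mxQp unitfE /toQp tofrac_eq0.
Qed.

Lemma invmx_mxQp n (A : 'M[R]_n) : A \in unitmx -> invmx (mxQp A) = mxQp (invmx A).
Proof.
move=> uA; have h : mxQp A *m mxQp (invmx A) = 1%:M by rewrite -mxQpM mulmxV // mxQp1.
exact: invmx_right.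
Qed.

Lemma in_Zp_toQp (z : R) : in_Zp (toQp z). Proof. by exists z. Qed.
Lemma in_ZpD (x y : Q) : in_Zp x -> in_Zp y -> in_Zp (x + y).
Proof. by case=> a -> [b ->]; exists (a + b); rewrite rmorphD. Qed.
Lemma in_ZpN (x : Q) : in_Zp x -> in_Zp (- x).
Proof. by case=> a ->; exists (- a); rewrite rmorphN. Qed.
Lemma in_ZpB (x y : Q) : in_Zp x -> in_Zp y -> in_Zp (x - y).
Proof. by move=> hx hy; apply: in_ZpD => //; apply: in_ZpN. Qed.
Lemma in_Zp0 : in_Zp (0 : Q). Proof. by exists 0; rewrite rmorph0. Qed.
Lemma in_Zp_mxQp m n (A : 'M[R]_(m, n)) i j : in_Zp (mxQp A i j).
Proof. by rewrite mxE; apply: in_Zp_toQp. Qed.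

Lemma in_image0 n (M : 'M[R]_n) : in_image M 0.
Proof. by exists 0; rewrite mulmx0. Qed.
Lemma in_imageD n (M : 'M[R]_n) X Y : in_image M X -> in_image M Y -> in_image M (X + Y).
Proof. by case=> a -> [b ->]; exists (a + b); rewrite mulmxDr. Qed.
Lemma in_imageN n (M : 'M[R]_n) X : in_image M X -> in_image M (- X).
Proof. by case=> a ->; exists (- a); rewrite mulmxN. Qed.
Lemma in_imageB n (M : 'M[R]_n) X Y : in_image M X -> in_image M Y -> in_image M (X - Y).
Proof. by move=> hx hy; apply: in_imageD => //; apply: in_imageN. Qed.
Lemma in_image_eq n (M : 'M[R]_n) X Y : X = Y -> in_image M X -> in_image M Y.
Proof. by move=> ->. Qed.

End Qp.

Section Iso.
Variable p : nat.
Local Notation R := (padic_int p).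

Definition eqm n (B : 'M[R]_n) X Y := in_image B (X - Y).

Lemma eqm_refl n (B : 'M[R]_n) X : eqm B X X.
Proof. by rewrite /eqm subrr; apply: in_image0. Qed.
Lemma eqm_sym n (B : 'M[R]_n) X Y : eqm B X Y -> eqm B Y X.
Proof. by rewrite /eqm => /in_imageN; rewrite opprB. Qed.
Lemma eqm_trans n (B : 'M[R]_n) X Y Z : eqm B X Y -> eqm B Y Z -> eqm B X Z.
Proof. by rewrite /eqm => h1 h2; rewrite -(subrK Y X) -addrA; apply: in_imageD. Qed.
Lemma eqm_add n (B : 'M[R]_n) X X' Y Y' : eqm B X X' -> eqm B Y Y' -> eqm B (X + Y) (X' + Y').
Proof. by rewrite /eqm => h1 h2; rewrite opprD addrACA; apply: in_imageD. Qed.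

Lemma iso_trans a b c (A : 'M[R]_a) (B : 'M[R]_b) (C : 'M[R]_c) :
  cok_isometric A B -> cok_isometric B C -> cok_isometric A C.
Proof.
case=> g [g1 g2 g3 g4] [h [h1 h2 h3 h4]].
exists (fun X => h (g X)); split.
- by move=> X Y; split => H; [apply/h1/g1 | apply/g1/h1].
- move=> X Y; apply: (@eqm_trans _ _ _ (h (g X + g Y))); last exact: h2.
  exact/h1/g2.
- move=> Z; have [Y hY] := h3 Z; have [X hX] := g3 Y.
  exists X; apply: (@eqm_trans _ _ _ (h Y)) => //; exact/h1.
- move=> X Y.
  have -> : cok_pairing A X Y - cok_pairing C (h (g X)) (h (g Y)) =
    (cok_pairing A X Y - cok_pairing B (g X) (g Y)) +
    (cok_pairing B (g X) (g Y) - cok_pairing C (h (g X)) (h (g Y))) by ring.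
  exact: in_ZpD.
Qed.

Lemma pairing_cg a b (X Y : 'cV[Qp p]_b) (Ai : 'M[Qp p]_b) (U : 'M[Qp p]_(a, b)) V :
  V *m U = 1%:M ->
  ((U *m X)^T *m (V^T *m Ai *m V) *m (U *m Y)) = X^T *m Ai *m Y.
Proof.
move=> VU; rewrite trmx_mul !mulmxA -(mulmxA X^T U^T V^T) -trmx_mul VU trmx1 mulmx1.
by rewrite -(mulmxA _ V U) VU mulmx1.
Qed.

Lemma iso_cg a b (A : 'M[R]_a) (B : 'M[R]_b) : \det A != 0 -> cg A B -> cok_isometric A B.
Proof.
move=> dA [U [V [UV VU eB]]].
exists (fun X => U *m X); split.
- move=> X Y; rewrite -mulmxBr; split.
  + case=> w ->; exists (V^T *m w); rewrite eB -!mulmxA; congr (U *m (A *m _)).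
    by rewrite mulmxA -trmx_mul VU trmx1 mul1mx.
  + case=> w hw; exists (U^T *m w).
    by rewrite -[X - Y]mul1mx -VU -mulmxA hw eB !mulmxA VU mul1mx.
- by move=> X Y; rewrite mulmxDr subrr; exact: in_image0.
- by move=> Z; exists (V *m Z); rewrite mulmxA UV mul1mx subrr; exact: in_image0.
- move=> X Y; rewrite /cok_pairing eB !mxQpM mxQp_tr (invmx_cg (V := mxQp V)) ?unit_mxQp //;
    try by rewrite -mxQpM ?UV ?VU mxQp1.
  rewrite pairing_cg ?subrr; first exact: in_Zp0.
  by rewrite -mxQpM VU mxQp1.
Qed.

Lemma dsubmxB c n k (X Y : 'M[R]_(c + n, k)) : dsubmx (X - Y) = dsubmx X - dsubmx Y.
Proof. by apply/matrixP => i j; rewrite !mxE. Qed.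
Lemma dsubmxD c n k (X Y : 'M[R]_(c + n, k)) : dsubmx (X + Y) = dsubmx X + dsubmx Y.
Proof. by apply/matrixP => i j; rewrite !mxE. Qed.

Lemma iso_drop c n (C : 'M[R]_c) (N : 'M[R]_n) : C \in unitmx -> \det N != 0 ->
  cok_isometric (block_mx C 0 0 N) N.
Proof.
move=> uC dN; exists (fun X => dsubmx X); split.
- move=> X Y; rewrite -dsubmxB; split.
  + case=> w ->; exists (dsubmx w).
    by rewrite -[w]vsubmxK mul_block_col !mul0mx add0r !col_mxKd.
  + case=> w hw; exists (col_mx (invmx C *m usubmx (X - Y)) w).
    rewrite mul_block_col !mul0mx add0r addr0 mulmxA mulmxV // mul1mx -hw.
    by rewrite vsubmxK.
- by move=> X Y; rewrite dsubmxD subrr; exact: in_image0.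
- by move=> Z; exists (col_mx 0 Z); rewrite col_mxKd subrr; exact: in_image0.
- move=> X Y; rewrite /cok_pairing.
  have -> : invmx (mxQp (block_mx C 0 0 N)) =
            block_mx (mxQp (invmx C)) 0 0 (invmx (mxQp N)).
    apply: invmx_right; rewrite mxQp_block mulmx_block !mxQp0 !mulmx0 !mul0mx !addr0 !add0r.
    rewrite -mxQpM (mulmxV uC) mxQp1 (mulmxV (unit_mxQp dN)).
    by rewrite -scalar_mx_block.
  rewrite -[X]vsubmxK -[Y]vsubmxK !col_mxKd !mxQp_col tr_col_mx mul_row_block.
  rewrite !mulmx0 addr0 add0r mul_row_col mxE addrK.
  by rewrite -mxQp_tr -!mxQpM; apply: in_Zp_mxQp.
Qed.

Lemma pair_shiftl n (B : 'M[R]_n) X Y w : symmx B -> \det B != 0 ->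
  cok_pairing B (X + B *m w) Y = cok_pairing B X Y + toQp ((w^T *m Y) 0 0).
Proof.
move=> sB dB; rewrite /cok_pairing mxQpD linearD /= !mulmxDl mxE; congr (_ + _).
have sB' : B^T = B := sB.
rewrite mxQpM trmx_mul -[(mxQp B)^T]mxQp_tr sB' -(mulmxA _ (mxQp B)) mulmxV ?unit_mxQp // mulmx1.
by rewrite -mxQp_tr -mxQpM mxE.
Qed.

Lemma pair_shiftr n (B : 'M[R]_n) X Y w : \det B != 0 ->
  cok_pairing B X (Y + B *m w) = cok_pairing B X Y + toQp ((X^T *m w) 0 0).
Proof.
move=> dB; rewrite /cok_pairing mxQpD !mulmxDr mxE; congr (_ + _).
rewrite mxQpM mulmxA -(mulmxA _ _ (mxQp B)) mulVmx ?unit_mxQp // mulmx1.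
by rewrite -mxQp_tr -mxQpM mxE.
Qed.

Lemma pair_wd n (B : 'M[R]_n) X X' Y Y' : symmx B -> \det B != 0 ->
  eqm B X X' -> eqm B Y Y' -> in_Zp (cok_pairing B X Y - cok_pairing B X' Y').
Proof.
move=> sB dB [w hw] [v hv].
have -> : X = X' + B *m w by rewrite -hw addrC subrK.
have -> : Y = Y' + B *m v by rewrite -hv addrC subrK.
rewrite pair_shiftl // pair_shiftr //.
have -> : forall a b c : Qp p, a + b + c - a = b + c by move=> a0 b0 c0; ring.
by apply: in_ZpD; apply: in_Zp_toQp.
Qed.

Lemma iso_sym a b (A : 'M[R]_a) (B : 'M[R]_b) : symmx B -> \det B != 0 ->
  cok_isometric A B -> cok_isometric B A.
Proof.
move=> sB dB [g [g1 g2 g3 g4]].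
have [g' hg'] := choice g3.
have E Z : eqm B (g (g' Z)) Z by apply: eqm_sym; apply: hg'.
exists g'; split.
- move=> Z1 Z2; rewrite g1; split => h.
  + exact: eqm_trans (E Z1) (eqm_trans h (eqm_sym (E Z2))).
  + exact: eqm_trans (eqm_trans (eqm_sym (E Z1)) h) (E Z2).
- move=> Z1 Z2; apply/g1.
  apply: (@eqm_trans _ _ _ (Z1 + Z2)); first exact: E.
  apply: (@eqm_trans _ _ _ (g (g' Z1) + g (g' Z2))).
    by apply: eqm_add; apply: eqm_sym.
  exact: eqm_sym (g2 _ _).
- move=> X; exists (g X); apply/g1; exact: eqm_sym (E _).
- move=> Z1 Z2.
  have h1 := g4 (g' Z1) (g' Z2).
  have h2 := pair_wd sB dB (E Z1) (E Z2).
  have -> : cok_pairing B Z1 Z2 - cok_pairing A (g' Z1) (g' Z2) =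
    - (cok_pairing A (g' Z1) (g' Z2) - cok_pairing B (g (g' Z1)) (g (g' Z2)))
    + (cok_pairing B (g (g' Z1)) (g (g' Z2)) - cok_pairing B Z1 Z2) * (-1) by ring.
  apply: in_ZpD; first exact: in_ZpN.
  by rewrite mulrN1; apply: in_ZpN.
Qed.
End Iso.

Section Stab.
Variable p : nat.
Hypothesis pp : prime p.
Local Notation R := (padic_int p).
Local Notation pi := (@piF p).

Lemma comm_inv (K : comUnitRingType) n (A B S : 'M[K]_n) :
  A \in unitmx -> B \in unitmx -> A *m S = S *m B -> invmx A *m S = S *m invmx B.
Proof.
move=> uA uB e.
by rewrite -[LHS]mulmx1 -(mulmxV uB) !mulmxA -(mulmxA _ S) -e mulmxA mulVmx // mul1mx.
Qed.

Lemma key_stab m (N N' S : 'M[R]_m) :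
  symmx N -> symmx N' -> symmx S -> map_mx pi N = 0 -> \det N != 0 ->
  invmx (mxQp N) - invmx (mxQp N') = mxQp S ->
  exists R1 R2 : 'M[R]_(m + m), [/\ symmx R1, R1 \in unitmx, symmx R2, R2 \in unitmx &
    cg (block_mx N 0 0 R1) (block_mx N' 0 0 R2)].
Proof.
move=> sN sN' sS pN dN eS.
have sN1 : N^T = N := sN.
have sS1 : S^T = S := sS.
have uIN : (1%:M - N *m S) \in unitmx.
  by rewrite (unitmx_piF _ pp) map_mxB map_mxM pN mul0mx subr0 map_mx1 unitmx1.
have uSN : (1%:M - S *m N) \in unitmx.
  by rewrite (unitmx_piF _ pp) map_mxB map_mxM pN mulmx0 subr0 map_mx1 unitmx1.
have c : (1%:M - S *m N) *m S = S *m (1%:M - N *m S).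
  by rewrite mulmxBl mulmxBr mul1mx mulmx1 mulmxA.
set T := S *m invmx (1%:M - N *m S).
have cT : (1%:M - S *m N) *m T = S.
  by rewrite /T mulmxA c -mulmxA mulmxV // mulmx1.
have eT : T^T = T.
  rewrite /T trmx_mul trmx_inv linearB /= trmx1 trmx_mul sN1 sS1.
  exact: comm_inv.
have eN' : N' = N + N *m T *m N.
  apply: (@mxQp_inj p); rewrite -[mxQp N']invmxK.
  have -> : invmx (mxQp N') = invmx (mxQp N) - mxQp S.
    by rewrite -eS opprB addrC subrK.
  apply: invmx_right.
  have uN := unit_mxQp dN.
  have e0 : T *m N - S *m N - S *m N *m T *m N = 0.
    have -> : T *m N - S *m N - S *m N *m T *m N = (T - S - S *m N *m T) *m N.
      by rewrite !mulmxBl.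
    have h : T - S *m N *m T = S by rewrite -[in RHS]cT mulmxBl mul1mx mulmxA.
    by rewrite addrAC h subrr mul0mx.
  rewrite mxQpD !mxQpM mulmxBl !mulmxDr mulVmx // !mulmxA mulVmx // mul1mx.
  rewrite -!mxQpM -addrA -mxQpD -mxQpB.
  suff -> : S *m invmx (1%:M - N *m S) *m N - (S *m N + S *m N *m S *m invmx (1%:M - N *m S) *m N) = 0.
    by rewrite mxQp0 addr0.
  by rewrite opprD addrA -e0 /T !mulmxA.
pose Y : 'M[R]_(m, m + m) := row_mx 1%:M 1%:M.
pose D : 'M[R]_m := - T - 2%:M.
pose K : 'M[R]_(m + m) := block_mx 0 1%:M 1%:M D.
pose Rm : 'M[R]_(m + m) := block_mx (T + 2%:M) 1%:M 1%:M 0.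
have eD : T + 2%:M + D = 0 by rewrite /D -opprD subrr.
have RK : Rm *m K = 1%:M.
  rewrite /Rm /K mulmx_block !mulmx0 !mul0mx !mulmx1 !mul1mx !addr0 !add0r eD.
  by rewrite -scalar_mx_block.
have KR : K *m Rm = 1%:M.
  rewrite /Rm /K mulmx_block !mulmx0 !mul0mx !mulmx1 !mul1mx !addr0 !add0r.
  by rewrite eD -scalar_mx_block.
have sD : D^T = D by rewrite /D linearB linearN /= eT tr_scalar_mx.
have sK : K^T = K by rewrite /K tr_block_mx sD trmx0 trmx1.
have sR : Rm^T = Rm by rewrite /Rm tr_block_mx trmx0 trmx1 linearD /= eT tr_scalar_mx.
have two : (2%:M : 'M[R]_m) = 1%:M + 1%:M.
  by apply/matrixP => i j; rewrite !mxE mulrnDl.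
have YKY : Y *m K *m Y^T = - T.
  rewrite /Y /K mul_row_block tr_row_mx trmx1 mul_row_col !mulmx0 !mulmx1 add0r.
  by rewrite /D two mul1mx addrA addrC -addrA addNr addr0.
pose R1 := Rm - Y^T *m N *m Y.
pose X := block_mx N (N *m Y) (Y^T *m N) Rm.
have cg1 : cg (block_mx N 0 0 R1) X.
  exists (block_mx 1%:M 0 Y^T 1%:M), (block_mx 1%:M 0 (- Y^T) 1%:M); split.
  - rewrite mulmx_block !mulmx0 !mul0mx !mulmx1 !mul1mx !addr0 !add0r subrr.
    by rewrite -scalar_mx_block.
  - rewrite mulmx_block !mulmx0 !mul0mx !mulmx1 !mul1mx !addr0 !add0r addrC subrr.
    by rewrite -scalar_mx_block.
  rewrite tr_block_mx trmxK !trmx0 !trmx1 !mulmx_block !mulmx0 !mul0mx !mulmx1 !mul1mx.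
  rewrite !addr0 !add0r /X /R1 addrC subrK.
  by [].
have cg2 : cg (block_mx N' 0 0 Rm) X.
  exists (block_mx 1%:M (N *m Y *m K) 0 1%:M), (block_mx 1%:M (- (N *m Y *m K)) 0 1%:M); split.
  - rewrite mulmx_block !mulmx0 !mul0mx !mulmx1 !mul1mx !addr0 !add0r addrC subrr.
    by rewrite -scalar_mx_block.
  - rewrite mulmx_block !mulmx0 !mul0mx !mulmx1 !mul1mx !addr0 !add0r subrr.
    by rewrite -scalar_mx_block.
  rewrite tr_block_mx !trmx0 !trmx1 !mulmx_block !mulmx0 !mul0mx !mulmx1 !mul1mx.
  rewrite !addr0 !add0r !trmx_mul sK sN1 /X.
  rewrite -!mulmxA KR mulmx1 !mulmxA RK mul1mx.
  congr block_mx.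
  rewrite -(mulmxA (N *m Y *m K) Rm K) RK mulmx1.
  rewrite -(mulmxA (N *m Y) K Y^T) -(mulmxA N Y (K *m Y^T)) (mulmxA Y K Y^T) YKY.
  by rewrite mulmxN mulNmx eN' addrK.
exists R1, Rm; split.
- by rewrite /symmx /R1 linearB /= sR !trmx_mul trmxK sN1 mulmxA.
- rewrite (unitmx_piF _ pp) /R1 map_mxB !map_mxM pN mulmx0 mul0mx subr0 -unitmx_piF //.
  by case: (mulmx1_unit RK).
- exact: sR.
- by case: (mulmx1_unit RK).
exact: cg_trans cg1 (cg_sym cg2).
Qed.
End Stab.

Section Decomp.
Variable p : nat.
Hypothesis pp : prime p.
Local Notation R := (padic_int p).
Local Notation F := ('F_(padic_prime p)).
Local Notation pi := (@piF p).

Lemma rank_cong (K : fieldType) n (V S : 'M[K]_n) : V \in unitmx ->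
  \rank (V *m S *m V^T) = \rank S.
Proof.
move=> uV; rewrite mxrankMfree ?row_free_unit ?unitmx_tr //.
by rewrite -mxrank_tr trmx_mul mxrankMfree ?row_free_unit ?unitmx_tr // mxrank_tr.
Qed.

Lemma sym_pid (K : fieldType) r m (Z : 'M[K]_(r + m)) :
  ((pid_mx r : 'M[K]_(r + m)) *m Z)^T = (pid_mx r : 'M[K]_(r + m)) *m Z ->
  exists2 Z1 : 'M[K]_r, Z1^T = Z1 & (pid_mx r : 'M[K]_(r + m)) *m Z = block_mx Z1 0 0 0.
Proof.
rewrite pid_mx_block -[Z]submxK mulmx_block !mul0mx !mul1mx !addr0 tr_block_mx trmx0.
move=> /eq_block_mx [e1 e2 _ _].
exists (ulsubmx Z) => //.
by rewrite -e2.
Qed.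

Lemma decomp_gen r m (M : 'M[R]_(r + m)) : symmx M -> \rank (map_mx pi M) = r ->
  exists (A : 'M[R]_r) (N : 'M[R]_m),
    [/\ symmx A, A \in unitmx, symmx N, map_mx pi N = 0 & cg M (block_mx A 0 0 N)].
Proof.
move=> sM rk.
have sM1 : M^T = M := sM.
set S := map_mx pi M.
have sS : S^T = S by rewrite /S map_trmx sM1.
pose V := invmx (col_ebase S).
have uV : V \in unitmx by rewrite unitmx_inv col_ebase_unit.
have eVS : V *m S = pid_mx (\rank S) *m row_ebase S.
  by rewrite -{1}(mulmx_ebase S) /V !mulmxA mulVmx ?col_ebase_unit // mul1mx.
have symP : (V *m S *m V^T)^T = V *m S *m V^T.
  by rewrite !trmx_mul trmxK sS mulmxA.
rewrite eVS rk -mulmxA in symP.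
have [Z1 sZ1 eZ] := sym_pid symP.
have eP0 : V *m S *m V^T = block_mx Z1 0 0 0 by rewrite eVS rk -mulmxA eZ.
have uZ1 : Z1 \in unitmx.
  rewrite -row_free_unit /row_free.
  have := rank_cong S uV; rewrite eP0 rank_diag_block_mx mxrank0 addn0 rk => ->.
  by [].
pose U := map_mx (@lF p) V.
have piU : map_mx pi U = V.
  by apply/matrixP => i j; rewrite !mxE piF_lF.
have uU : U \in unitmx by rewrite (unitmx_piF _ pp) piU.
pose M2 := U *m M *m U^T.
have sM2 : M2^T = M2 by rewrite /M2 !trmx_mul trmxK sM1 mulmxA.
have piM2 : map_mx pi M2 = block_mx Z1 0 0 0.
  have piUt : map_mx pi U^T = V^T by apply/matrixP => i j; rewrite !mxE piF_lF.
  by rewrite /M2 !map_mxM piU piUt -eP0.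
move: piM2 sM2; rewrite -[M2]submxK.
set P := ulsubmx M2; set B' := ursubmx M2; set B := dlsubmx M2; set Q := drsubmx M2.
rewrite map_block_mx => /eq_block_mx [pP pB' pB pQ].
rewrite tr_block_mx => /eq_block_mx [sP eB' _ sQ].
have uP : P \in unitmx by rewrite (unitmx_piF _ pp) pP.
pose N := Q - B *m invmx P *m B^T.
exists P, N; split => //.
- by rewrite /symmx /N linearB /= !trmx_mul trmxK trmx_inv sP sQ mulmxA.
- by rewrite /N map_mxB !map_mxM pB mul0mx mul0mx subr0.
apply: (@cg_trans _ _ _ _ _ M2).
  exists U, (invmx U); split; [exact: mulmxV | exact: mulVmx | by []].
rewrite -[M2]submxK -/P -/B' -/B -/Q.
exists (block_mx 1%:M 0 (- (B *m invmx P)) 1%:M), (block_mx 1%:M 0 (B *m invmx P) 1%:M); split.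
- rewrite mulmx_block !mulmx0 !mul0mx !mulmx1 !mul1mx !addr0 !add0r addrC subrr.
  by rewrite -scalar_mx_block.
- rewrite mulmx_block !mulmx0 !mul0mx !mulmx1 !mul1mx !addr0 !add0r subrr.
  by rewrite -scalar_mx_block.
rewrite tr_block_mx !trmx0 !trmx1 !mulmx_block !mulmx0 !mul0mx !mulmx1 !mul1mx !addr0.
have e1 : - (B *m invmx P) *m P + B = 0.
  by rewrite mulNmx -mulmxA mulVmx // mulmx1 addNr.
have e2 : P *m (- (B *m invmx P))^T + B' = 0.
  by rewrite linearN /= trmx_mul trmx_inv sP eB' mulmxN mulmxA mulmxV // mul1mx addNr.
by rewrite e1 e2 mul0mx add0r /N mulNmx -eB' addrC.
Qed.

Lemma decomp_gen' n r m (M : 'M[R]_n) (e : (r + m)%N = n) : symmx M ->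
  \rank (map_mx pi M) = r ->
  exists (A : 'M[R]_r) (N : 'M[R]_m),
    [/\ symmx A, A \in unitmx, symmx N, map_mx pi N = 0 & cg M (block_mx A 0 0 N)].
Proof. by case: n / e in M *; apply: decomp_gen. Qed.

Lemma sym_cast (K : Type) a b (e : a = b) (A : 'M[K]_a) : symmx A -> symmx (castmx (e, e) A).
Proof. by case: b / e; rewrite castmx_id. Qed.
Lemma unit_cast (K : comUnitRingType) a b (e : a = b) (A : 'M[K]_a) :
  A \in unitmx -> castmx (e, e) A \in unitmx.
Proof. by case: b / e; rewrite castmx_id. Qed.

Lemma decomp n (M : 'M[R]_n) : symmx M -> exists m, (m <= n)%N /\
  exists (A : 'M[R]_(n - m)) (N : 'M[R]_m),
    [/\ symmx A, A \in unitmx, symmx N, map_mx pi N = 0 & cg M (block_mx A 0 0 N)].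
Proof.
move=> sM; set r := \rank (map_mx pi M).
have hr : (r <= n)%N by apply: rank_leq_row.
have e : (r + (n - r))%N = n by rewrite subnKC.
have [A [N [sA uA sN pN cM]]] := decomp_gen' e sM erefl.
exists (n - r)%N; split; first exact: leq_subr.
have e2 : r = (n - (n - r))%N by rewrite subKn.
exists (castmx (e2, e2) A), N; split => //.
- exact: sym_cast.
- exact: unit_cast.
apply: (cg_trans cM); apply: cg_block; [exact: cg_cast | exact: cg_refl].
Qed.
End Decomp.

Section Lift.
Variable p : nat.
Hypothesis pp : prime p.
Local Notation R := (padic_int p).
Local Notation F := ('F_(padic_prime p)).
Local Notation pi := (@piF p).

Lemma kill n (N : 'M[R]_n) : \det N != 0 ->
  exists k, forall j, (k <= j)%N -> forall X, in_image N ((p ^ j)%N%:R *: X).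
Proof.
move=> dN; have [k [u [uu eu]]] := Zp_val pp dN.
exists k => j kj X; exists (u^-1 *: ((p ^ (j - k))%N%:R *: (\adj N *m X))).
rewrite -!scalemxAr mulmxA mul_mx_adj eu mul_scalar_mx !scalerA.
congr (_ *: _).
have -> : (p ^ j)%N = ((p ^ (j - k)) * p ^ k)%N by rewrite -expnD subnK.
rewrite natrM; set a := _%:R; set b := _%:R.
have -> : u^-1 * a * (b * u) = a * b * (u^-1 * u) by ring.
by rewrite mulVr // mulr1.
Qed.

Lemma kill2 a b (N : 'M[R]_a) (N' : 'M[R]_b) : \det N != 0 -> \det N' != 0 ->
  exists k, (forall X, in_image N ((p ^ k)%N%:R *: X)) /\ (forall X, in_image N' ((p ^ k)%N%:R *: X)).
Proof.
move=> d1 d2; have [k1 h1] := kill d1; have [k2 h2] := kill d2.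
exists (maxn k1 k2); split; [apply: h1 | apply: h2]; by rewrite ?leq_maxl ?leq_maxr.
Qed.


Lemma eqm_opp n (B : 'M[R]_n) X Y : eqm B X Y -> eqm B (- X) (- Y).
Proof. by rewrite /eqm -opprD => /in_imageN. Qed.

Lemma eqm_sum n (B : 'M[R]_n) (I : Type) (r : seq I) (F G : I -> 'cV[R]_n) :
  (forall i, eqm B (F i) (G i)) -> eqm B (\sum_(i <- r) F i) (\sum_(i <- r) G i).
Proof.
move=> h; apply: (big_ind2 (fun u v => eqm B u v)); first exact: eqm_refl.
  by move=> ? ? ? ? ; apply: eqm_add.
by move=> i _; apply: h.
Qed.

Section Lin.
Variables (a b : nat) (N : 'M[R]_a) (N' : 'M[R]_b) (h : 'cV[R]_a -> 'cV[R]_b).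
Hypothesis h1 : forall X Y, in_image N (X - Y) <-> in_image N' (h X - h Y).
Hypothesis h2 : forall X Y, in_image N' (h (X + Y) - (h X + h Y)).
Variable k : nat.
Hypothesis kN : forall X, in_image N ((p ^ k)%N%:R *: X).
Hypothesis kN' : forall X, in_image N' ((p ^ k)%N%:R *: X).

Lemma h0 : eqm N' (h 0) 0.
Proof.
have := h2 0 0; rewrite addr0 => /in_imageN; rewrite opprB.
by rewrite /eqm subr0 addrC addKr.
Qed.

Lemma hN X : eqm N' (h (- X)) (- h X).
Proof.
have e1 : eqm N' (h X + h (- X)) 0.
  apply: eqm_trans h0; rewrite -(subrr X); apply: eqm_sym; exact: h2.
by move: e1; rewrite /eqm subr0 opprK addrC.
Qed.

Lemma hMn X n : eqm N' (h (X *+ n)) (h X *+ n).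
Proof.
elim: n => [|n IH]; first by rewrite !mulr0n; apply: h0.
rewrite !mulrS; apply: eqm_trans (h2 _ _) _; apply: eqm_add => //; exact: eqm_refl.
Qed.

Lemma hMz X z : eqm N' (h (X *~ z)) (h X *~ z).
Proof.
case: z => n; first exact: hMn.
rewrite NegzE !mulrNz; apply: eqm_trans (hN _) _; apply: eqm_opp; exact: hMn.
Qed.

Lemma hZ c X : eqm N' (h (c *: X)) (c *: h X).
Proof.
have [y ey] := Zp_approx pp c k.
set z := padic_digits c k in ey.
have e1 : eqm N' (h (c *: X)) (h (z%:~R *: X)).
  apply/h1; rewrite {1}ey scalerDl addrC addKr -scalerA; exact: kN.
apply: eqm_trans e1 _; rewrite scaler_int; apply: eqm_trans (hMz _ _) _.
rewrite -scaler_int /eqm ey scalerDl opprD addrA subrr add0r -scalerA.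
by apply: in_imageN; apply: kN'.
Qed.

Lemma hsum (I : Type) (r : seq I) (F : I -> 'cV[R]_a) :
  eqm N' (h (\sum_(i <- r) F i)) (\sum_(i <- r) h (F i)).
Proof.
apply: (big_ind2 (fun u v => eqm N' (h u) v)); first exact: h0.
  by move=> x1 y1 x2 y2 e1 e2; apply: eqm_trans (h2 _ _) _; apply: eqm_add.
by move=> i _; apply: eqm_refl.
Qed.

Definition Gm : 'M[R]_(b, a) := \matrix_(i, j) h (delta_mx j 0) i 0.

Lemma Gm_col j : Gm *m delta_mx j 0 = h (delta_mx j 0).
Proof. by rewrite -colE; apply/matrixP => i k0; rewrite !mxE ord1. Qed.

Lemma hG X : eqm N' (h X) (Gm *m X).
Proof.
have eX : X = \sum_(i < a) X i 0 *: delta_mx i 0.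
  rewrite {1}[X]matrix_sum_delta; apply: eq_bigr => i _; by rewrite big_ord1.
have eG : Gm *m X = \sum_(i < a) X i 0 *: h (delta_mx i 0).
  rewrite {1}eX mulmx_sumr; apply: eq_bigr => i _; by rewrite -scalemxAr Gm_col.
rewrite eG {1}eX; apply: eqm_trans (hsum _ _) _.
apply: eqm_sum => i; exact: hZ.
Qed.
End Lin.

Lemma pairing_delta n (A : 'M[Qp p]_n) (i j : 'I_n) :
  (((delta_mx i 0 : 'cV_n)^T *m A *m (delta_mx j 0 : 'cV_n)) 0 0) = A i j.
Proof. by rewrite trmx_delta -rowE -colE !mxE. Qed.

Lemma mxQp_delta n (i : 'I_n) : mxQp (delta_mx i 0 : 'cV[R]_n) = delta_mx i 0.
Proof. by apply/matrixP => x y; rewrite !mxE; case: (_ && _); rewrite ?rmorph1 ?rmorph0. Qed.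

Lemma lift_iso a b (N : 'M[R]_a) (N' : 'M[R]_b) : \det N != 0 -> \det N' != 0 ->
  map_mx pi N' = 0 -> cok_isometric N N' ->
  exists G : 'M[R]_(b, a), (exists Xs : 'M[F]_(a, b), map_mx pi G *m Xs = 1%:M) /\
    (forall i j, in_Zp (invmx (mxQp N) i j - ((mxQp G)^T *m invmx (mxQp N') *m mxQp G) i j)).
Proof.
move=> dN dN' pN' [h [h1 h2 h3 h4]].
have [k [kN kN']] := kill2 dN dN'.
exists (Gm h); split.
  have surj : forall z : 'cV[F]_b, exists x, map_mx pi (Gm h) *m x = z.
    move=> z; pose Z := map_mx (@lF p) z.
    have [X hX] := h3 Z.
    have := eqm_trans hX (hG h1 h2 kN kN' X); case=> w ew.
    exists (map_mx pi X).
    have := congr1 (map_mx pi) ew; rewrite !map_mxB !map_mxM pN' mul0mx.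
    have -> : map_mx pi Z = z by apply/matrixP => i j; rewrite !mxE piF_lF.
    by move/eqP; rewrite subr_eq0 => /eqP ->.
  have [x hx] := choice (fun j : 'I_b => surj (delta_mx j 0)).
  exists (\matrix_(i, j) x j i 0).
  apply/matrixP => i j; rewrite !mxE.
  have := congr1 (fun M : 'cV[F]_b => M i 0) (hx j); rewrite !mxE eqxx andbT => <-.
  by apply: eq_bigr => l _; rewrite !mxE.
move=> i j; have := h4 (delta_mx i 0) (delta_mx j 0).
rewrite /cok_pairing -!(Gm_col h) !mxQpM !mxQp_delta !pairing_delta.
rewrite trmx_mul !mulmxA => H; by rewrite -[X in _ - X]pairing_delta !mulmxA.
Qed.
End Lift.

Section Main.
Variable p : nat.
Hypothesis pp : prime p.
Local Notation R := (padic_int p).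
Local Notation pi := (@piF p).

Lemma unit_neq0 (x : R) : x \is a GRing.unit -> x != 0.
Proof. by apply: contraTneq => ->; rewrite unitr0. Qed.

Lemma det_cg a b (X : 'M[R]_a) (Y : 'M[R]_b) (e : b = a) :
  cg X Y -> \det X != 0 -> \det Y != 0.
Proof.
case: a / e X => X [U [V [UV VU ->]]] dX.
have uU : U \in unitmx by case: (mulmx1_unit UV).
rewrite !det_mulmx det_tr; apply: mulf_neq0; first apply: mulf_neq0 => //.
  by apply: unit_neq0; rewrite -unitmxE.
by apply: unit_neq0; rewrite -unitmxE.
Qed.

Lemma det_block a b (A : 'M[R]_a) (B : 'M[R]_b) :
  \det (block_mx A 0 0 B) = \det A * \det B.
Proof. exact: det_ublock. Qed.

Lemma block_unit a b (A : 'M[R]_a) (B : 'M[R]_b) :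
  A \in unitmx -> B \in unitmx -> block_mx A 0 0 B \in unitmx.
Proof. by rewrite !unitmxE det_block unitrM => -> ->. Qed.

Lemma block_sym (K : Type) a b (A : 'M[K]_a) (B : 'M[K]_b) (z1 : 'M[K]_(a, b)) (z2 : 'M[K]_(b, a)) :
  z1^T = z2 -> symmx A -> symmx B -> symmx (block_mx A z1 z2 B).
Proof.
move=> ez sA sB; rewrite /symmx tr_block_mx sA sB -ez trmxK //.
Qed.

Lemma symB (K : zmodType) n (X Y : 'M[K]_n) : symmx X -> symmx Y -> symmx (X - Y).
Proof.
rewrite /symmx => sX sY; rewrite -[in RHS]sX -[in RHS]sY.
by apply/matrixP => i j; rewrite !mxE.
Qed.
Lemma sym_inv (K : comUnitRingType) n (X : 'M[K]_n) : symmx X -> symmx (invmx X).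
Proof. by rewrite /symmx => sX; rewrite trmx_inv sX. Qed.
Lemma sym_cong (K : comRingType) a b (X : 'M[K]_a) (G : 'M[K]_(a, b)) :
  symmx X -> symmx (G^T *m X *m G).
Proof. by rewrite /symmx => sX; rewrite !trmx_mul trmxK sX mulmxA. Qed.
End Main.

Unset Implicit Arguments. Set Strict Implicit.

Theorem mainTheorem4 (p : nat) (pp : prime p) (n1 n2 : nat)
  (hn1 : (0 < n1)%N) (hn2 : (0 < n2)%N)
  (M : 'M[padic_int p]_n1) (M' : 'M[padic_int p]_n2)
  (sM : symmx M) (sM' : symmx M') (dM : \det M != 0) (dM' : \det M' != 0) :
  [<->
   (* (i) *)
   cok_isometric M M';
   (* (ii) *)
   exists m : nat, (m <= minn n1 n2)%N /\
     exists (A : 'M[padic_int p]_(n1 - m)) (N : 'M[padic_int p]_m)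
            (A' : 'M[padic_int p]_(n2 - m)) (N' : 'M[padic_int p]_m),
       [/\ symmx A /\ A \in unitmx,
           symmx N /\ in_pZp_mx N,
           symmx A' /\ A' \in unitmx /\ symmx N' /\ in_pZp_mx N',
           symmx (invmx (mxQp N) - invmx (mxQp N')) /\
             in_Zp_mx (invmx (mxQp N) - invmx (mxQp N')) &
           congruent_dim M (block_mx A 0 0 N) /\
           congruent_dim M' (block_mx A' 0 0 N')];
   (* (iii) *)
   exists n : nat, (maxn n1 n2 <= n)%N /\
     exists (C : 'M[padic_int p]_(n - n1)) (C' : 'M[padic_int p]_(n - n2)),
       [/\ symmx C, C \in unitmx, symmx C', C' \in unitmx &
           congruent_dim (block_mx C 0 0 M) (block_mx C' 0 0 M')]].
Proof.
tfae.
- move=> iso.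
  have [m1 [hm1 [A [N [sA uA sN pN cM]]]]] := decomp pp sM.
  have [m2 [hm2 [A' [N' [sA' uA' sN' pN' cM']]]]] := decomp pp sM'.
  have e1 : (n1 - m1 + m1)%N = n1 by rewrite subnK.
  have e2 : (n2 - m2 + m2)%N = n2 by rewrite subnK.
  have dB := det_cg e1 cM dM.
  have dB' := det_cg e2 cM' dM'.
  have dN : \det N != 0 by move: dB; rewrite det_block mulf_eq0 negb_or => /andP [].
  have dN' : \det N' != 0 by move: dB'; rewrite det_block mulf_eq0 negb_or => /andP [].
  have iNM := iso_trans (iso_sym sN dN (iso_drop uA dN)) (iso_cg dB (cg_sym cM)).
  have iMN' := iso_trans (iso_cg dM' cM') (iso_drop uA' dN').
  have h := iso_trans iNM (iso_trans iso iMN').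
  have h' := iso_sym sN' dN' h.
  have [G [[Xs GX] hG]] := lift_iso pp dN dN' pN' h.
  have [G' [[Xs' GX'] _]] := lift_iso pp dN' dN pN h'.
  have le21 : (m2 <= m1)%N.
    have := mxrankM_maxl (map_mx (@piF p) G) Xs; rewrite GX mxrank1 => H.
    exact: leq_trans H (rank_leq_col _).
  have le12 : (m1 <= m2)%N.
    have := mxrankM_maxl (map_mx (@piF p) G') Xs'; rewrite GX' mxrank1 => H.
    exact: leq_trans H (rank_leq_col _).
  have em : m2 = m1 by apply/eqP; rewrite eqn_leq le21 le12.
  subst m2.
  have uG : G \in unitmx by rewrite (unitmx_piF _ pp); case: (mulmx1_unit GX).
  have dG : \det G != 0 by apply: unit_neq0; rewrite -unitmxE.
  have sN1 : N^T = N := sN.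
  have sN1' : N'^T = N' := sN'.
  pose Gi := invmx G.
  pose N'' := Gi *m N' *m Gi^T.
  have cN : cg N' N''.
    by exists Gi, G; split; [exact: mulVmx | exact: mulmxV | by []].
  have hinv : invmx (mxQp N'') = (mxQp G)^T *m invmx (mxQp N') *m mxQp G.
    rewrite /N'' /Gi !mxQpM mxQp_tr -invmx_mxQp //.
    apply: invmx_cg; first exact: unit_mxQp.
      by rewrite mulVmx // unit_mxQp.
    by rewrite mulmxV // unit_mxQp.
  exists m1; split; first by rewrite leq_min hm1 hm2.
  exists A, N, A', N''; split.
  - by split.
  - by split => //; apply/(pZp_piF _ pp).
  - split => //; split => //; split.
      by rewrite /symmx /N'' !trmx_mul trmxK sN1' mulmxA.
    by apply/(pZp_piF _ pp); rewrite /N'' !map_mxM pN' mulmx0 mul0mx.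
  - rewrite hinv; split.
      apply: symB; [apply: sym_inv | apply: sym_cong; apply: sym_inv].
        by rewrite /symmx -mxQp_tr sN1.
      by rewrite /symmx -mxQp_tr sN1'.
    by move=> i j; have := hG i j; rewrite !mxE.
  split; first exact: cg_cgd e1 cM.
  apply: (cg_cgd e2); apply: (cg_trans cM'); apply: cg_block; [exact: cg_refl | exact: cN].
- case=> m [hm [A [N [A' [N' [[sA uA] [sN pN] [sA' [uA' [sN' pN']]] [symS inS] [cM cM']]]]]]].
  have hm1 : (m <= n1)%N by move: hm; rewrite leq_min => /andP [].
  have hm2 : (m <= n2)%N by move: hm; rewrite leq_min => /andP [].
  have e1 : (n1 - m + m)%N = n1 by rewrite subnK.
  have cM0 := cgd_cg cM.
  have cM0' := cgd_cg cM'.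
  have dB := det_cg e1 cM0 dM.
  have dN : \det N != 0 by move: dB; rewrite det_block mulf_eq0 negb_or => /andP [].
  have piN : map_mx (@piF p) N = 0 by apply/(pZp_piF _ pp).
  have [S eS] : exists S : 'M[padic_int p]_m, mxQp S = invmx (mxQp N) - invmx (mxQp N').
    have /choice [f hf] : forall ij : 'I_m * 'I_m,
        exists z, (invmx (mxQp N) - invmx (mxQp N')) ij.1 ij.2 = toQp z.
      by move=> [i j]; apply: inS.
    exists (\matrix_(i, j) f (i, j)); apply/matrixP => i j.
    by rewrite [in LHS]mxE [in LHS]mxE -(hf (i, j)).
  have sS : symmx S.
    apply: (@mxQp_inj p); rewrite mxQp_tr eS; exact: symS.
  have [R1 [R2 [sR1 uR1 sR2 uR2 key]]] := key_stab pp sN sN' sS piN dN (esym eS).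
  exists (n1 + n2 + m)%N; split; first by rewrite geq_max; apply/andP; split; lia.
  pose C0 := block_mx A' 0 0 R1.
  pose C0' := block_mx A 0 0 R2.
  have ec : ((n2 - m) + (m + m))%N = (n1 + n2 + m - n1)%N by lia.
  have ec' : ((n1 - m) + (m + m))%N = (n1 + n2 + m - n2)%N by lia.
  exists (castmx (ec, ec) C0), (castmx (ec', ec') C0'); split.
  - by apply: sym_cast; apply: block_sym => //; rewrite trmx0.
  - by apply: unit_cast; apply: block_unit.
  - by apply: sym_cast; apply: block_sym => //; rewrite trmx0.
  - by apply: unit_cast; apply: block_unit.
  have ee : ((n1 + n2 + m - n2) + n2)%N = ((n1 + n2 + m - n1) + n1)%N by lia.
  apply: (cg_cgd ee).
  have L1 : cg (block_mx (castmx (ec, ec) C0) 0 0 M) (block_mx C0 0 0 (block_mx A 0 0 N)).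
    by apply: cg_block; [exact: cg_sym (cg_cast _ _) | exact: cM0].
  have L4 : cg (block_mx (castmx (ec', ec') C0') 0 0 M') (block_mx C0' 0 0 (block_mx A' 0 0 N')).
    by apply: cg_block; [exact: cg_sym (cg_cast _ _) | exact: cM0'].
  pose T := block_mx A 0 0 (block_mx A' 0 0 (block_mx N' 0 0 R2)).
  have L2 : cg (block_mx C0 0 0 (block_mx A 0 0 N)) T.
    apply: cg_trans (cg_swap _ _) _.
    apply: cg_trans (cg_assoc _ _ _) _.
    apply: cg_block; first exact: cg_refl.
    apply: cg_trans (cg_sym (cg_assoc _ _ _)) _.
    apply: cg_trans (cg_block (cg_swap _ _) (cg_refl _)) _.
    apply: cg_trans (cg_assoc _ _ _) _.
    apply: cg_block; [exact: cg_refl | exact: key].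
  have L3 : cg (block_mx C0' 0 0 (block_mx A' 0 0 N')) T.
    apply: cg_trans (cg_assoc _ _ _) _.
    apply: cg_block; first exact: cg_refl.
    apply: cg_trans (cg_swap _ _) _.
    exact: cg_assoc.
  exact: cg_trans L1 (cg_trans L2 (cg_sym (cg_trans L4 L3))).
- case=> n [hn [C [C' [sC uC sC' uC' cgd]]]].
  have cC := cgd_cg cgd.
  have d1 : \det (block_mx C 0 0 M) != 0.
    by rewrite det_block mulf_neq0 // unit_neq0 // -unitmxE.
  have i1 := iso_sym sM dM (iso_drop uC dM).
  have i2 := iso_cg d1 cC.
  have i3 := iso_drop uC' dM'.
  exact: iso_trans i1 (iso_trans i2 i3).
Qed.
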